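(* Let $b>1$ and consider on $M_h$ with $2h=1$ the reduced prolate integrable system $(\ell_{23},G_{pro})$, where $G_{pro}=b\ell_{12}^2+b\ell_{13}^2+\ell_{14}^2$. The image of the momentum map $(\ell_{23},G_{pro}):M_h\to\mathbb R^2$ is the region bounded by the curve $\mathcal P_1: G_{pro}=b(1-\ell_{23}^2)$ and the line $\mathcal P_2: G_{pro}=0$. There is an isolated critical value at $(\ell_{23},G_{pro})=(0,1)$.
   Context: $\mathbf L=(\ell_{12},\ell_{13},\ell_{14},\ell_{23},\ell_{24},\ell_{34})\in\mathbb R^6\cong\mathfrak{so}(4)^*$ with the Lie–Poisson bracket of $\mathfrak{so}(4)$ (extending $\ell_{ji}=-\ell_{ij}$: $\{\ell_{ij},\ell_{jk}\}=-\ell_{ik}$ for distinct $i,j,k$, and $\{\ell_{ij},\ell_{kl}\}=0$ when $\{i,j\}\cap\{k,l\}=\emptyset$); equivalently $\ell_{ij}=x_iy_j-x_jy_i$ with canonical bracket on $T^*\mathbb R^4$. $M_h=\{\mathbf L:\sum_{i<j}\ell_{ij}^2=2h,\ \ell_{12}\ell_{34}-\ell_{13}\ell_{24}+\ell_{14}\ell_{23}=0\}\cong S^2\times S^2$ is a symplectic leaf. This system arises from separating the geodesic flow on $S^3$ in prolate coordinates (ellipsoidal parameters $(0,1,1,b)$). *)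

(* Defs.v *)
From Stdlib Require Import Reals.
From Coquelicot Require Import Coquelicot.
Open Scope R_scope.

(* A point L = (l12, l13, l14, l23, l24, l34) of R^6 = so(4)^*. *)
Record L6 := mkL6 { l12 : R; l13 : R; l14 : R; l23 : R; l24 : R; l34 : R }.

Definition Lline (p v : L6) (t : R) : L6 :=
  mkL6 (l12 p + t * l12 v) (l13 p + t * l13 v) (l14 p + t * l14 v)
       (l23 p + t * l23 v) (l24 p + t * l24 v) (l34 p + t * l34 v).

Definition ddir (f : L6 -> R) (p v : L6) : R := Derive (fun t => f (Lline p v t)) 0.

Definition Cas1 (L : L6) : R :=
  l12 L ^ 2 + l13 L ^ 2 + l14 L ^ 2 + l23 L ^ 2 + l24 L ^ 2 + l34 L ^ 2.
Definition Cas2 (L : L6) : R :=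
  l12 L * l34 L - l13 L * l24 L + l14 L * l23 L.

Definition M_h (h : R) (L : L6) : Prop := Cas1 L = 2 * h /\ Cas2 L = 0.

Definition G_pro (b : R) (L : L6) : R :=
  b * l12 L ^ 2 + b * l13 L ^ 2 + l14 L ^ 2.

Definition tangent_Mh (p v : L6) : Prop := ddir Cas1 p v = 0 /\ ddir Cas2 p v = 0.

(* p is a critical point of the momentum map F = (l23, G_pro) restricted to M_h:
   p lies on M_h and dF_p restricted to T_p M_h has rank < 2, i.e. some nontrivial
   linear combination of d l23 and d G_pro vanishes on T_p M_h. *)
Definition critical_point (b h : R) (p : L6) : Prop :=
  M_h h p /\
  exists a c : R, (a <> 0 \/ c <> 0) /\
    forall v : L6, tangent_Mh p v -> a * ddir l23 p v + c * ddir (G_pro b) p v = 0.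

Definition critical_value (b h x g : R) : Prop :=
  exists p : L6, critical_point b h p /\ l23 p = x /\ G_pro b p = g.

(* Main.v *)
Require Import Defs.
From Stdlib Require Import Reals Lra Psatz.
From Coquelicot Require Import Coquelicot.
Open Scope R_scope.
Definition dotL (p v : L6) := l12 p * l12 v + l13 p * l13 v + l14 p * l14 v + l23 p * l23 v + l24 p * l24 v + l34 p * l34 v.
Definition qv (p : L6) := mkL6 (l34 p) (- l24 p) (l23 p) (l14 p) (- l13 p) (l12 p).
Lemma ddir_Cas1 p v : ddir Cas1 p v = 2 * dotL p v.
Proof. unfold ddir. apply is_derive_unique. unfold Cas1, Lline, dotL; cbn [l12 l13 l14 l23 l24 l34]. auto_derive; [auto| ring]. Qed.
Lemma ddir_Cas2 p v : ddir Cas2 p v = dotL (qv p) v.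
Proof. unfold ddir. apply is_derive_unique. unfold Cas2, Lline, dotL, qv; cbn [l12 l13 l14 l23 l24 l34]. auto_derive; [auto| ring]. Qed.
Lemma ddir_l23 p v : ddir l23 p v = l23 v.
Proof. unfold ddir. apply is_derive_unique. unfold Lline; cbn [l12 l13 l14 l23 l24 l34]. auto_derive; [auto| ring]. Qed.
Lemma ddir_G b p v : ddir (G_pro b) p v = 2*b*l12 p*l12 v + 2*b*l13 p*l13 v + 2*l14 p*l14 v.
Proof. unfold ddir. apply is_derive_unique. unfold G_pro, Lline; cbn [l12 l13 l14 l23 l24 l34]. auto_derive; [auto| ring]. Qed.
Lemma mz x y : x <> 0 -> x * y = 0 -> y = 0.
Proof. intros H1 H2. destruct (Rmult_integral _ _ H2); [contradiction|auto]. Qed.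

Lemma alg (b A B C X D E a c al be : R) : 1 < b ->
  A^2+B^2+C^2+X^2+D^2+E^2 = 1 -> A*E - B*D + C*X = 0 -> (a <> 0 \/ c <> 0) ->
  2*c*b*A = al*A + be*E -> 2*c*b*B = al*B - be*D -> 2*c*C = al*C + be*X ->
  a = al*X + be*C -> 0 = al*D - be*B -> 0 = al*E + be*A ->
  b*A^2+b*B^2+C^2 = 0 \/ b*A^2+b*B^2+C^2 = b*(1-X^2) \/ (X = 0 /\ b*A^2+b*B^2+C^2 = 1).
Proof.
  intros hb H1 H2 Hac E1 E2 E3 E4 E5 E6.
  assert (fin : A = 0 -> B = 0 -> D = 0 -> E = 0 ->
     b*A^2+b*B^2+C^2 = 0 \/ b*A^2+b*B^2+C^2 = b*(1-X^2) \/ (X = 0 /\ b*A^2+b*B^2+C^2 = 1)).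
  { intros -> -> -> ->. assert (C*X = 0) by lra.
    destruct (Rmult_integral _ _ H) as [->| ->].
    - left; ring.
    - right; right; split; [auto| lra]. }
  destruct (Req_dec be 0) as [Hb0|Hb0].
  - subst be. destruct (Req_dec al 0) as [Ha0|Ha0].
    + subst al. assert (Hc : c <> 0) by (destruct Hac; [lra|auto]).
      assert (A = 0) by (apply (mz (2*c*b)); [apply Rmult_integral_contrapositive; split; [lra|lra] | lra]).
      assert (B = 0) by (apply (mz (2*c*b)); [apply Rmult_integral_contrapositive; split; [lra|lra] | lra]).
      assert (C = 0) by (apply (mz (2*c)); lra).
      subst. left; ring.
    + assert (D = 0) by (apply (mz al); lra).
      assert (E = 0) by (apply (mz al); lra). subst D E.
      destruct (Req_dec (2*c*b - al) 0) as [Hk|Hk].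
      * assert (Hc : c <> 0) by (intro; subst; lra).
        assert (C = 0) by (apply (mz (2*c*(1-b))); [apply Rmult_integral_contrapositive; split; lra | nra]).
        subst C. right; left. nra.
      * apply fin; auto; apply (mz (2*c*b - al)); auto; lra.
  - destruct (Req_dec (al*(2*c*b-al) + be^2) 0) as [Hz|Hz].
    + exfalso.
      set (k := 2*c*b - al) in *.
      assert (F1 : be*E = k*A) by (unfold k; lra).
      assert (F2 : be*D = -(k*B)) by (unfold k; lra).
      assert (F3 : be*X = (2*c-al)*C) by lra.
      assert (F4 : k*(A^2+B^2) + (2*c-al)*C^2 = 0).
      { replace (k * (A ^ 2 + B ^ 2) + (2 * c - al) * C ^ 2)
          with (A*(be*E) - B*(be*D) + C*(be*X)) by (rewrite F1, F2, F3; ring).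
        replace (A*(be*E) - B*(be*D) + C*(be*X)) with (be*(A*E - B*D + C*X)) by ring.
        rewrite H2; ring. }
      assert (F5 : be^2*(A^2+B^2) = al*(2*c-al)*C^2).
      { assert (be^2 = -(al*k)) by lra. rewrite H.
        assert (al*(k*(A^2+B^2) + (2*c-al)*C^2) = 0) by (rewrite F4; ring).
        lra. }
      assert (F6 : b*(al*(2*c-al)) = -((b-1)*al^2) - be^2).
      { unfold k in Hz. nra. }
      assert (F7 : al*(2*c-al) < 0).
      { assert (0 < be^2) by (replace (be^2) with (Rsqr be) by (unfold Rsqr; ring); apply Rsqr_pos_lt; auto). nra. }
      assert (G1 : 0 <= al*(2*c-al)*C^2) by (rewrite <- F5; apply Rmult_le_pos; [apply pow2_ge_0 | apply Rplus_le_le_0_compat; apply pow2_ge_0]).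
      assert (G2 : 0 <= C^2) by apply pow2_ge_0.
      assert (G3 : C^2 = 0) by nra.
      assert (C = 0) by (nra).
      assert (A^2+B^2 = 0) by (subst C; apply (mz (be^2)); [apply pow_nonzero; auto | nra]).
      assert (A = 0) by nra. assert (B = 0) by nra.
      subst A B C.
      assert (X = 0) by (apply (mz be); lra).
      assert (E = 0) by (apply (mz be); lra).
      assert (D = 0) by (apply (mz be); lra).
      subst. lra.
    + assert (A = 0).
      { apply (mz (al*(2*c*b-al) + be^2)); auto.
        replace ((al * (2 * c * b - al) + be ^ 2) * A) with (al*((2*c*b-al)*A) + be*(be*A)) by ring.
        replace ((2*c*b-al)*A) with (be*E) by lra. replace (be*A) with (-(al*E)) by lra. ring. }
      assert (B = 0).
      { apply (mz (al*(2*c*b-al) + be^2)); auto.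
        replace ((al * (2 * c * b - al) + be ^ 2) * B) with (al*((2*c*b-al)*B) + be*(be*B)) by ring.
        replace ((2*c*b-al)*B) with (-(be*D)) by lra. replace (be*B) with (al*D) by lra. ring. }
      subst A B.
      apply fin; auto; apply (mz be); auto; lra.
Qed.

Definition proj (p u : L6) : L6 :=
  let s := dotL u p in let t := dotL u (qv p) in
  mkL6 (l12 u - s*l12 p - t*l12 (qv p)) (l13 u - s*l13 p - t*l13 (qv p))
       (l14 u - s*l14 p - t*l14 (qv p)) (l23 u - s*l23 p - t*l23 (qv p))
       (l24 u - s*l24 p - t*l24 (qv p)) (l34 u - s*l34 p - t*l34 (qv p)).

Lemma dp1 p u : dotL p (proj p u) = dotL u p * (1 - Cas1 p) - dotL u (qv p) * (2 * Cas2 p).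
Proof. destruct p as [A B C X D E], u as [u1 u2 u3 u4 u5 u6]; unfold dotL, proj, qv, Cas1, Cas2; simpl; unfold dotL; simpl; ring. Qed.
Lemma dp2 p u : dotL (qv p) (proj p u) = dotL u (qv p) * (1 - Cas1 p) - dotL u p * (2 * Cas2 p).
Proof. destruct p as [A B C X D E], u as [u1 u2 u3 u4 u5 u6]; unfold dotL, proj, qv, Cas1, Cas2; simpl; unfold dotL; simpl; ring. Qed.
Lemma tangent_proj p u : Cas1 p = 1 -> Cas2 p = 0 -> tangent_Mh p (proj p u).
Proof.
  intros H1 H2. unfold tangent_Mh. rewrite ddir_Cas1, ddir_Cas2, dp1, dp2, H1, H2. split; ring.
Qed.
Lemma crit_curves b p : 1 < b -> critical_point b (1/2) p ->
  G_pro b p = 0 \/ G_pro b p = b*(1 - l23 p^2) \/ (l23 p = 0 /\ G_pro b p = 1).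
Proof.
  intros hb [[H1 H2] [a [c [Hac H]]]].
  assert (H1' : Cas1 p = 1) by lra.
  pose proof (H _ (tangent_proj p (mkL6 1 0 0 0 0 0) H1' H2)) as E1.
  pose proof (H _ (tangent_proj p (mkL6 0 1 0 0 0 0) H1' H2)) as E2.
  pose proof (H _ (tangent_proj p (mkL6 0 0 1 0 0 0) H1' H2)) as E3.
  pose proof (H _ (tangent_proj p (mkL6 0 0 0 1 0 0) H1' H2)) as E4.
  pose proof (H _ (tangent_proj p (mkL6 0 0 0 0 1 0) H1' H2)) as E5.
  pose proof (H _ (tangent_proj p (mkL6 0 0 0 0 0 1) H1' H2)) as E6.
  rewrite ddir_l23, ddir_G in E1, E2, E3, E4, E5, E6.
  clear H.
  destruct p as [A B C X D E].
  unfold Cas1, Cas2, G_pro, proj, qv in *; simpl in *; unfold dotL in *; simpl in *.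
  apply (alg b A B C X D E a c (2*c*b*A^2 + 2*c*b*B^2 + 2*c*C^2 + a*X)
             (2*c*b*A*E - 2*c*b*B*D + 2*c*C*X + a*C)); auto; try lra.
Qed.
Theorem proposition4 (b : R) (hb : 1 < b) :
  (forall x g : R,
     (exists L : L6, M_h (1/2) L /\ l23 L = x /\ G_pro b L = g) <->
     (-1 <= x <= 1 /\ 0 <= g <= b * (1 - x ^ 2)))
  /\
  (critical_value b (1/2) 0 1 /\
   exists eps : R, 0 < eps /\
     forall x g : R, critical_value b (1/2) x g ->
       (x - 0) ^ 2 + (g - 1) ^ 2 < eps ^ 2 -> x = 0 /\ g = 1).
Proof.
  split; [|split].
  - intros x g; split.
    + intros [[A B C X D E] [[H1 H2] [Hx Hg]]].
      unfold Cas1, Cas2, G_pro in *; simpl in *. subst x g.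
      assert (0 <= A^2) by apply pow2_ge_0. assert (0 <= B^2) by apply pow2_ge_0.
      assert (0 <= C^2) by apply pow2_ge_0. assert (0 <= D^2) by apply pow2_ge_0.
      assert (0 <= E^2) by apply pow2_ge_0. assert (0 <= X^2) by apply pow2_ge_0.
      assert (X^2 <= 1) by lra.
      split; [split; nra | split; nra].
    + intros [[hx1 hx2] [hg1 hg2]].
      assert (0 <= g / b) by (apply Rdiv_le_0_compat; lra).
      assert (g / b <= 1 - x^2) by (apply Rmult_le_reg_l with b; [lra|]; field_simplify; lra).
      exists (mkL6 0 (sqrt (g/b)) 0 x 0 (sqrt (1 - x^2 - g/b))).
      unfold M_h, Cas1, Cas2, G_pro; cbn [l12 l13 l14 l23 l24 l34].
      rewrite !pow2_sqrt by lra.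
      split; [split|split]; try field; try ring; lra.
  - exists (mkL6 0 0 1 0 0 0). split; [|simpl; unfold G_pro; simpl; split; ring].
    split.
    + unfold M_h, Cas1, Cas2; simpl; split; field.
    + exists 0, 1. split; [right; lra|].
      intros v [Hv1 Hv2]. rewrite ddir_Cas1 in Hv1. rewrite ddir_l23, ddir_G.
      unfold dotL in Hv1; simpl in *. lra.
  - exists ((b-1)/(2*b)). split.
    + apply Rdiv_lt_0_compat; lra.
    + intros x g [p [Hc [Hx Hg]]] Hd.
      set (eps := (b-1)/(2*b)) in *.
      assert (he1 : b * eps = (b-1)/2) by (unfold eps; field; lra).
      assert (he0 : 0 < eps) by (unfold eps; apply Rdiv_lt_0_compat; lra).
      assert (he2 : eps < 1/2).
      { apply Rmult_lt_reg_l with b; lra. }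
      assert (hx2 : 0 <= x^2) by apply pow2_ge_0.
      assert (hg2 : 0 <= (g-1)^2) by apply pow2_ge_0.
      subst x g; destruct (crit_curves b p hb Hc) as [G0|[G1|[X0 G2]]].
      all: set (x := l23 p) in *; set (g := G_pro b p) in *.
      * exfalso. rewrite G0 in *. nra.
      * exfalso.
        assert (x^2 < eps^2) by lra.
        assert (b*x^2 < (b-1)/2*eps) by nra.
        assert (g - 1 > eps) by nra.
        nra.
      * split; auto.
Qed.
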